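(* Let $K^\flat$ be the completion of an algebraic closure of $\mathbb{F}_p((t))$, with valuation ring $K^{\flat,\circ}$ and residue field $k=\overline{\mathbb{F}_p}$, viewed as a subfield of $K^\flat$. Let $u\in K^{\flat,\circ}$ with $|u|<1$ and let $g\in K^{\flat,\circ}\langle X_1,\dots,X_N\rangle$ be of the form \[g=\sum_{i=0}^\infty g_iu^i\quad\text{with } g_i\in k\langle X_1,\dots,X_N\rangle.\] Then there exists $\varepsilon>0$, depending on $g$, such that for every $x\in k^N$, either $g(x)=0$ or $|g(x)|>\varepsilon$.
   Context: $K^{\flat,\circ}\langle X_1,\dots,X_N\rangle$ is the ring of power series with coefficients in $K^{\flat,\circ}$ tending to $0$. Since $k$ carries the trivial absolute value, $k\langle X_1,\dots,X_N\rangle=k[X_1,\dots,X_N]$; in particular $|h(x)|\in\{0,1\}$ for $h\in k[X_1,\dots,X_N]$ and $x\in k^N$. *)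

(* Defs.v *)
From HB Require Import structures.
From mathcomp Require Import all_boot all_order all_algebra.
From mathcomp Require Export mpoly.
From mathcomp Require Export reals.
Set Implicit Arguments. Unset Strict Implicit. Unset Printing Implicit Defensive.
Import Order.TTheory GRing.Theory Num.Theory.
Local Open Scope ring_scope.

Definition nonarch_abs (K : fieldType) (R : realType) (v : K -> R) : Prop :=
  [/\ forall x, 0 <= v x,
      forall x, (v x == 0) = (x == 0),
      forall x y, v (x * y) = v x * v y
    & forall x y, v (x + y) <= Num.max (v x) (v y)].

Definition abs_nontrivial (K : fieldType) (R : realType) (v : K -> R) : Prop :=
  exists x, v x != 0 /\ v x != 1.

Definition abs_cvg_to (K : fieldType) (R : realType) (v : K -> R)
  (s : nat -> K) (y : K) : Prop :=
  forall e : R, 0 < e -> exists n0 : nat, forall n : nat, (n0 <= n)%N ->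
    v (s n - y) < e.

Definition abs_complete (K : fieldType) (R : realType) (v : K -> R) : Prop :=
  forall s : nat -> K,
    (forall e : R, 0 < e -> exists n0 : nat, forall m n : nat,
        (n0 <= m)%N -> (n0 <= n)%N -> v (s m - s n) < e) ->
    exists y, abs_cvg_to v s y.

(* k is an algebraic closure of F_p: algebraically closed, of characteristic p,
   and algebraic over F_p (every element lies in some F_{p^n}). *)
Definition is_alg_closure_Fp (p : nat) (k : closedFieldType) : Prop :=
  p \in [pchar k] /\ forall c : k, exists n : nat, (0 < n)%N /\ c ^+ (p ^ n) = c.

(* iota : k -> K identifies k with the residue field of (K, v):
   |iota c| = 1 for c <> 0, and every element of the valuation ring is
   congruent modulo the maximal ideal to some iota c. *)
Definition residue_field_section (K : fieldType) (R : realType) (v : K -> R)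
  (k : fieldType) (iota : {rmorphism k -> K}) : Prop :=
  (forall c : k, c != 0 -> v (iota c) = 1) /\
  (forall x : K, v x <= 1 -> exists c : k, v (x - iota c) < 1).

Definition series_eval_partial (K : fieldType) (k : fieldType)
  (iota : {rmorphism k -> K}) (N : nat) (gs : nat -> {mpoly k[N]}) (u : K)
  (x : 'I_N -> k) (n : nat) : K :=
  \sum_(i < n) iota ((gs i).@[x]) * u ^+ i.

(* Main.v *)
Require Import Defs.
From HB Require Import structures.
From mathcomp Require Import all_boot all_order all_algebra.
From mathcomp Require Import mpoly.
From Stdlib Require Import Classical ClassicalEpsilon.
From mathcomp Require Import zify lra.
Import Order.TTheory GRing.Theory Num.Theory.
Local Open Scope ring_scope.
Set Implicit Arguments. Unset Strict Implicit.

Definition inL (R : comNzRingType) (l : seq R) (p : R) :=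
  exists c : nat -> R, p = \sum_(i < size l) c i * l`_i.

Definition SN (R : comNzRingType) := forall f : nat -> R,
  exists n, forall m, exists c : nat -> R, f m = \sum_(i < n) c i * f i.

Section InL.
Variable R : comNzRingType.
Implicit Types (l : seq R) (p q : R).

Lemma inL0 l : inL l 0.
Proof. by exists (fun _ => 0); rewrite big1 // => i _; rewrite mul0r. Qed.

Lemma inLD l p q : inL l p -> inL l q -> inL l (p + q).
Proof.
move=> [c ->] [d ->]; exists (fun i => c i + d i).
by rewrite -big_split; apply: eq_bigr => i _; rewrite mulrDl.
Qed.

Lemma inLM l a p : inL l p -> inL l (a * p).
Proof.
move=> [c ->]; exists (fun i => a * c i).
by rewrite mulr_sumr; apply: eq_bigr => i _; rewrite mulrA.
Qed.

Lemma inLN l p : inL l p -> inL l (- p).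
Proof. by move=> h; rewrite -mulN1r; apply: inLM. Qed.

Lemma inLB l p q : inL l p -> inL l q -> inL l (p - q).
Proof. by move=> hp hq; apply: inLD => //; apply: inLN. Qed.

Lemma inL_sum l n (F : 'I_n -> R) : (forall i, inL l (F i)) -> inL l (\sum_(i < n) F i).
Proof.
move=> h; apply: (big_ind (inL l)) => //; first exact: inL0.
exact: inLD.
Qed.

Lemma inL_mem l i : (i < size l)%N -> inL l l`_i.
Proof.
move=> hi; exists (fun j => (j == i)%:R).
rewrite (bigD1 (Ordinal hi)) //= eqxx mul1r big1 ?addr0 // => j hj.
have -> : (nat_of_ord j == i) = false.
  by apply/negbTE; apply: contra hj => /eqP e; apply/eqP/val_inj.
by rewrite mul0r.
Qed.

Lemma inL_trans l l' p : inL l p -> (forall i, (i < size l)%N -> inL l' l`_i) -> inL l' p.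
Proof.
move=> [c ->] h; apply: inL_sum => i; apply: inLM; exact: h.
Qed.

End InL.

Lemma ex_min_size (R : nzRingType) (Q : {poly R} -> Prop) :
  (exists p, Q p) -> exists p, Q p /\ forall q, Q q -> (size p <= size q)%N.
Proof.
move=> [p0 Hp0].
suff H : forall n (p : {poly R}), (size p <= n)%N -> Q p ->
   exists p, Q p /\ forall q, Q q -> (size p <= size q)%N by exact: (H _ p0 (leqnn _) Hp0).
elim=> [|n IH] p Hs Qp.
  exists p; split => // q _; by rewrite (leq_trans Hs).
destruct (classic (exists q, Q q /\ (size q < size p)%N)) as [[q [Qq Hq]]|Hn].
  apply: (IH q) => //; rewrite -ltnS (leq_trans Hq) //.
exists p; split => // q Qq; rewrite leqNgt; apply/negP => Hq; apply: Hn; by exists q.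
Qed.

Section HilbertPoly.
Variable R : comNzRingType.
Hypothesis snR : SN R.

Lemma SN_poly : SN {poly R}.
Proof.
move=> f; apply: NNPP => Hnot.
pose J (p : {poly R}) := exists n, inL (mkseq f n) p.
have mono : forall n M p, (n <= M)%N -> inL (mkseq f n) p -> inL (mkseq f M) p.
  move=> n M p hnM hp; apply: (inL_trans hp) => i; rewrite size_mkseq => hi.
  rewrite nth_mkseq // -(nth_mkseq 0 f (leq_trans hi hnM)).
  by apply: inL_mem; rewrite size_mkseq (leq_trans hi hnM).
have bnd : forall l : seq {poly R}, (forall i, (i < size l)%N -> J l`_i) ->
    exists M, forall i, (i < size l)%N -> inL (mkseq f M) l`_i.
  move=> l hl.
  suff: forall k, (k <= size l)%N -> exists M, forall i, (i < k)%N -> inL (mkseq f M) l`_i.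
    by move/(_ (size l) (leqnn _)).
  elim=> [|k IH] hk; first by exists 0%N.
  have [M HM] := IH (ltnW hk).
  have [n Hn] := hl k hk.
  exists (maxn M n) => i; rewrite ltnS leq_eqVlt => /orP [/eqP ->|hi].
    by apply: (mono n) => //; rewrite leq_maxr.
  by apply: (mono M); [rewrite leq_maxl | apply: HM].
have JinL : forall l p, (forall i, (i < size l)%N -> J l`_i) -> inL l p -> J p.
  move=> l p hl hp; have [M HM] := bnd l hl; exists M; exact: inL_trans hp HM.
have A : forall l : seq {poly R}, (forall i, (i < size l)%N -> J l`_i) ->
    exists p, J p /\ ~ inL l p.
  move=> l hl; apply: NNPP => Hn.
  have all : forall p, J p -> inL l p.
    by move=> p Jp; apply: NNPP => np; apply: Hn; exists p.
  have [M HM] := bnd l hl.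
  apply: Hnot; exists M => m.
  have : inL (mkseq f M) (f m).
    apply: (inL_trans (all _ _)) => //.
    exists m.+1; rewrite -(nth_mkseq 0 f (ltnSn m)); apply: inL_mem.
    by rewrite size_mkseq.
  move=> [c ->]; exists c; rewrite size_mkseq; apply: eq_bigr => i _.
  by rewrite nth_mkseq.
pose P l p := J p /\ ~ inL l p.
pose step l := epsilon (inhabits (0 : {poly R}))
   (fun p => P l p /\ forall q, P l q -> (size p <= size q)%N).
have step_spec : forall l, (exists p, P l p) ->
    P l (step l) /\ forall q, P l q -> (size (step l) <= size q)%N.
  move=> l hex; apply: (epsilon_spec (inhabits (0 : {poly R}))
   (fun p => P l p /\ forall q, P l q -> (size p <= size q)%N)).
  exact: ex_min_size.
pose fix lst j := if j is j'.+1 then rcons (lst j') (step (lst j')) else [::].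
pose h j := step (lst j).
have size_lst : forall j, size (lst j) = j.
  by elim=> [|j IH] //=; rewrite size_rcons IH.
have nth_lst : forall j i, (i < j)%N -> (lst j)`_i = h i.
  elim=> [|j IH] i // hi /=; rewrite nth_rcons size_lst.
  move: hi; rewrite ltnS leq_eqVlt => /orP [/eqP ->|hi]; first by rewrite ltnn eqxx.
  by rewrite hi IH.
have Hh : forall j, P (lst j) (h j) /\ forall q, P (lst j) q -> (size (h j) <= size q)%N.
  elim/ltn_ind=> j IH; apply: step_spec; apply: A => i; rewrite size_lst => hi.
  by rewrite nth_lst //; have [[]] := IH i hi.
have sub : forall i j p, (i <= j)%N -> inL (lst i) p -> inL (lst j) p.
  move=> i j p hij hp; apply: (inL_trans hp) => t; rewrite size_lst => ht.
  rewrite nth_lst // -(nth_lst j) ?(leq_trans ht) //; apply: inL_mem.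
  by rewrite size_lst (leq_trans ht).
have size_le : forall i j, (i < j)%N -> (size (h i) <= size (h j))%N.
  move=> i j hij; have [_ Hmin] := Hh i; apply: Hmin.
  have [[Jh nh] _] := Hh j; split => // hh; apply: nh; exact: (sub i) (ltnW hij) hh.
have hnz : forall j, h j != 0.
  move=> j; apply/eqP => e; have [[_ nh] _] := Hh j; apply: nh; rewrite e; exact: inL0.
have Jlst : forall j i, (i < size (lst j))%N -> J (lst j)`_i.
  move=> j i; rewrite size_lst => hi; rewrite nth_lst //; by have [[]] := Hh i.
have [n Hn] := snR (fun j => lead_coef (h j)).
have [c Hc] := Hn n.
pose s j := size (h j).
have spos : forall j, (0 < s j)%N by move=> j; rewrite /s size_poly_gt0.
pose q := \sum_(i < n) (c i *: 'X^(s n - s i) * h i).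
have inq : inL (lst n) q.
  apply: inL_sum => i; apply: inLM; rewrite -(nth_lst n) //; apply: inL_mem.
  by rewrite size_lst.
have coefq : forall t, (s n - 1 <= t)%N ->
    q`_t = if t == (s n - 1)%N then lead_coef (h n) else 0.
  move=> t ht; rewrite /q coef_sum Hc.
  case: eqP => [->|tne].
    apply: eq_bigr => i _; rewrite -scalerAl coefZ coefXnM.
    have := size_le i n (ltn_ord i); have := spos i; rewrite -/(s i) -/(s n) => p1 p2.
    have -> : (s n - 1 < s n - s i)%N = false by apply/negbTE; rewrite -leqNgt; lia.
    by rewrite lead_coefE; congr (_ * _); congr (_`_ _); rewrite -/(s i); lia.
  apply: big1 => i _; rewrite -scalerAl coefZ coefXnM.
  have := size_le i n (ltn_ord i); have := spos i; rewrite -/(s i) -/(s n) => p1 p2.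
  have -> : (t < s n - s i)%N = false by apply/negbTE; rewrite -leqNgt; lia.
  have : (size (h i) <= t - (s n - s i))%N by rewrite -/(s i); lia.
  by move/leq_sizeP => /(_ _ (leqnn _)) ->; rewrite mulr0.
pose r := h n - q.
have Pr : P (lst n) r.
  split.
    apply: (JinL (lst n.+1)); first exact: Jlst.
    apply: inLB; last exact: (sub n).
    by rewrite -(nth_lst n.+1) //; apply: inL_mem; rewrite size_lst.
  move=> hr; have [[_ nh] _] := Hh n; apply: nh.
  by have := inLD hr inq; rewrite subrK.
have : (size r <= s n - 1)%N.
  apply/leq_sizeP => t ht; rewrite /r coefB coefq //.
  case: eqP => [->|tne]; first by rewrite lead_coefE /s subn1 subrr.
  have : (size (h n) <= t)%N by rewrite -/(s n); lia.
  by move/leq_sizeP => /(_ _ (leqnn _)) ->; rewrite subr0.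
have [_ Hmin] := Hh n; have := Hmin r Pr; have := spos n; rewrite -/(s n); lia.
Qed.

End HilbertPoly.

Lemma SN_field (F : fieldType) : SN F.
Proof.
move=> f.
destruct (classic (exists i, f i != 0)) as [[i0 Hi0]|Hn].
  exists i0.+1 => m; exists (fun i => if i == i0 then f m / f i0 else 0).
  rewrite big_ord_recr /= eqxx big1 ?add0r ?divfK // => i _.
  by rewrite (ltn_eqF (ltn_ord i)) mul0r.
exists 0%N => m; exists (fun _ => 0); rewrite big_ord0.
by apply/eqP/negPn/negP => h; apply: Hn; exists m.
Qed.

Lemma SN_surj (A B : comNzRingType) (phi : A -> B) :
  phi 0 = 0 -> {morph phi : x y / x + y} -> {morph phi : x y / x * y} ->
  (forall b, exists a, phi a = b) -> SN A -> SN B.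
Proof.
move=> p0 pD pM sur snA g.
pose a i := epsilon (inhabits 0) (fun a => phi a = g i).
have ha : forall i, phi (a i) = g i.
  by move=> i; apply: (epsilon_spec (inhabits 0) (fun a => phi a = g i)).
have [n Hn] := snA a; exists n => m; have [c Hc] := Hn m.
exists (fun i => phi (c i)); rewrite -ha Hc (big_morph phi pD p0).
by apply: eq_bigr => i _; rewrite pM ha.
Qed.

Section MP.
Variable k : fieldType.

Lemma SN_mpoly n : SN {mpoly k[n]}.
Proof.
elim: n => [|n IH].
  apply: (@SN_surj k _ (fun c => c%:MP)); first exact: mpolyC0.
  - exact: mpolyCD.
  - exact: mpolyCM.
  - by move=> b; exists (b@_0%MM); rewrite mpolyKC.
  exact: SN_field.
pose phi (p : {poly {mpoly k[n]}}) : {mpoly k[n.+1]} :=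
  (map_poly (@mwiden n k) p).['X_ord_max].
apply: (@SN_surj _ _ phi).
- by rewrite /phi rmorph0 horner0.
- by move=> x y; rewrite /phi rmorphD hornerD.
- by move=> x y; rewrite /phi rmorphM hornerM.
- have img0 : forall b1 b2, (exists a, phi a = b1) -> (exists a, phi a = b2) ->
     (exists a, phi a = b1 * b2).
    by move=> _ _ [a1 <-] [a2 <-]; exists (a1 * a2); rewrite /phi rmorphM hornerM.
  have imgD : forall b1 b2, (exists a, phi a = b1) -> (exists a, phi a = b2) ->
     (exists a, phi a = b1 + b2).
    by move=> _ _ [a1 <-] [a2 <-]; exists (a1 + a2); rewrite /phi rmorphD hornerD.
  have imgC : forall c : k, exists a, phi a = c%:MP.
    by move=> c; exists (c%:MP%:P); rewrite /phi map_polyC hornerC /= mwidenC.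
  have imgX : forall i : 'I_n.+1, exists a, phi a = 'X_i.
    move=> i; case: (unliftP ord_max i) => [j ->|->].
      exists ('X_j)%:P; rewrite /phi map_polyC hornerC /= mwidenX mnmwiden1.
      congr 'X_[U_(_)]; apply: val_inj => /=; rewrite /bump; have := ltn_ord j; case: leqP => // h1 h2; lia.
    by exists 'X; rewrite /phi map_polyX hornerX.
  move=> b; elim/mpolyind: b => [|c m p _ _ Hp].
    by exists 0; rewrite /phi rmorph0 horner0.
  apply: (imgD) => //; rewrite -mul_mpolyC; apply: (img0) => //.
  rewrite mpolyXE_id; apply: (big_ind (fun b => exists a, phi a = b)) => //.
    by have [a ha] := imgC 1; exists a; rewrite ha.
  move=> i _; elim: (m i) => [|e [a ha]].
    by have [a ha] := imgC 1; exists a; rewrite ha expr0.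
  rewrite exprS; apply: (img0) => //; by exists a.
- exact: SN_poly.
Qed.
End MP.

Section Abs.
Variables (K : fieldType) (R : realType) (v : K -> R).
Hypothesis hv : nonarch_abs v.

Lemma v0 : v 0 = 0.
Proof. by case: hv => _ he _ _; apply/eqP; rewrite he. Qed.

Lemma vge0 x : 0 <= v x.
Proof. by case: hv. Qed.

Lemma vM x y : v (x * y) = v x * v y.
Proof. by case: hv. Qed.

Lemma vD x y : v (x + y) <= Num.max (v x) (v y).
Proof. by case: hv. Qed.

Lemma vpos x : x != 0 -> 0 < v x.
Proof.
case: hv => hg he _ _ hx; rewrite lt_neqAle hg andbT eq_sym he //.
Qed.

Lemma v1 : v 1 = 1.
Proof.
have h := vM 1 1; rewrite mulr1 in h.
have hp : 0 < v 1 by apply: vpos; exact: oner_neq0.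
nra.
Qed.

Lemma vN x : v (- x) = v x.
Proof.
have h := vM (-1) (-1); rewrite mulrNN mulr1 v1 in h.
have h0 := vge0 (-1).
have e : v (-1) = 1 by nra.
by rewrite -mulN1r vM e mul1r.
Qed.

Lemma vX x i : v (x ^+ i) = v x ^+ i.
Proof. elim: i => [|i IH]; by rewrite ?expr0 ?v1 // !exprS vM IH. Qed.

Lemma vsum_le n (F : 'I_n -> K) B : 0 <= B -> (forall i, v (F i) <= B) ->
  v (\sum_(i < n) F i) <= B.
Proof.
move=> hB hF; apply: (big_ind (fun x => v x <= B)) => //; first by rewrite v0.
move=> x y hx hy; apply: le_trans (vD x y) _; by rewrite ge_max hx hy.
Qed.

Lemma lim_ge (s : nat -> K) gx w n1 : 0 < w ->
  (forall n, (n1 <= n)%N -> w <= v (s n)) -> abs_cvg_to v s gx -> w <= v gx.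
Proof.
move=> hw hs hc; have [n2 Hn2] := hc w hw.
have h1 := Hn2 (maxn n1 n2) (leq_maxr _ _).
have h2 := hs (maxn n1 n2) (leq_maxl _ _).
have h3 := vD (s (maxn n1 n2) - gx) gx; rewrite subrK in h3.
have := le_trans h2 h3; rewrite le_max => /orP [h|//].
by have := lt_le_trans h1 h; rewrite ltxx.
Qed.

Lemma lim0 (s : nat -> K) gx : (forall n, s n = 0) -> abs_cvg_to v s gx -> gx = 0.
Proof.
move=> hs hc; apply/eqP/negPn/negP => hx.
have [n2 Hn2] := hc (v gx) (vpos hx).
by have := Hn2 n2 (leqnn _); rewrite hs sub0r vN ltxx.
Qed.
End Abs.

Unset Implicit Arguments.
Theorem mainTheorem8 (R : realType) (p : nat) (K : closedFieldType)
  (v : K -> R) (k : closedFieldType) (iota : {rmorphism k -> K})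
  (N : nat) (u : K) (gs : nat -> {mpoly k[N]}) :
  prime p ->
  p \in [pchar K] ->
  nonarch_abs v -> abs_nontrivial v -> abs_complete v ->
  is_alg_closure_Fp p k ->
  residue_field_section v iota ->
  v u < 1 ->
  exists eps : R, 0 < eps /\
    forall (x : 'I_N -> k) (gx : K),
      abs_cvg_to v (series_eval_partial iota gs u x) gx ->
      gx = 0 \/ eps < v gx.
Proof.
move=> _ _ hv _ _ _ [viota _] hu.
have [n0 Hn0] := SN_mpoly gs.
pose rho := v u.
have rho0 : 0 <= rho := vge0 hv u.
exists ((if u == 0 then 1 else rho ^+ n0) / 2); split.
  apply: divr_gt0 => //; case: eqP => [_|/eqP unz]; first exact: ltr01.
  by apply: exprn_gt0; apply: vpos.
move=> x gx Hcv.
pose c i := (gs i).@[x].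
pose t i := iota (c i) * u ^+ i.
have sE : forall n, series_eval_partial iota gs u x n = \sum_(i < n) t i by [].
have cm : forall m, (forall i, (i < n0)%N -> c i = 0) -> c m = 0.
  move=> m hc; have [d Hd] := Hn0 m; rewrite /c Hd.
  rewrite (big_morph _ (@mevalD _ _ x) (meval0 x)) big1 // => i _.
  by rewrite mevalM; have := hc i (ltn_ord i); rewrite /c => ->; rewrite mulr0.
have vt : forall i, v (t i) <= rho ^+ i.
  move=> i; rewrite /t (vM hv) (vX hv); apply: ler_piMl; first exact: exprn_ge0.
  case: (eqVneq (c i) 0) => [->|cnz]; first by rewrite rmorph0 (v0 hv).
  by rewrite viota.
case: (boolP [exists i : 'I_n0, t i != 0]) => [/existsP ex|nex].
  have exP : exists i, (i < n0)%N && (t i != 0).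
    by case: ex => i hi; exists i; rewrite ltn_ord hi.
  case: (ex_minnP exP) => j0 /andP [hj0 tj0] jmin.
  have tlt : forall i, (i < j0)%N -> t i = 0.
    move=> i hi; apply/eqP/negPn/negP => ti.
    have := jmin i; rewrite ti andbT (ltn_trans hi hj0) => /(_ isT); lia.
  have cj0 : c j0 != 0 by apply: contra tj0 => /eqP e; rewrite /t e rmorph0 mul0r.
  pose w := v (t j0).
  have wE : w = rho ^+ j0 by rewrite /w /t (vM hv) (vX hv) viota // mul1r.
  have wpos : 0 < w := vpos hv tj0.
  have Blt : rho * w < w by rewrite gtr_pMl.
  have B0 : 0 <= rho * w by apply: mulr_ge0 => //; exact: ltW.
  have hge : forall n, (j0.+1 <= n)%N -> w <= v (series_eval_partial iota gs u x n).
    move=> n hn; rewrite sE (bigD1 (Ordinal hn)) //=.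
    set rest := \sum_(i < n | _) _.
    have vr : v rest <= rho * w.
      rewrite /rest.
      apply: (big_ind (fun y => v y <= rho * w)) => //; first by rewrite (v0 hv).
        move=> a b ha hb; apply: le_trans (vD hv a b) _; by rewrite ge_max ha hb.
      move=> i hne; case: (ltngtP i j0) => [hi|hi|hi].
      - by rewrite tlt // (v0 hv).
      - apply: le_trans (vt i) _; rewrite wE -exprS; apply: ler_wiXn2l => //.
        exact: ltW.
      - by exfalso; move/negP: hne; apply; apply/eqP/val_inj.
    have := vD hv (t (Ordinal hn) + rest) (- rest).
    rewrite addrK (vN hv) -/w => hw; move: hw; rewrite le_max => /orP [//|h].
    by have := lt_le_trans Blt (le_trans h vr); rewrite ltxx.
  right; have := lim_ge hv wpos hge Hcv.
  apply: lt_le_trans.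
  case: eqP => [u0|/eqP unz].
    have j00 : j0 = 0%N.
      case: j0 tj0 {jmin tlt cj0 w wE wpos Blt B0 hge hj0} => // j.
      by rewrite /t u0 expr0n mulr0 eqxx.
    by rewrite wE j00 expr0; lra.
  have hle : rho ^+ n0 <= w by rewrite wE; apply: ler_wiXn2l => //; [exact: ltW | exact: ltnW].
  have : 0 < rho ^+ n0 by apply: exprn_gt0; apply: vpos.
  lra.
left; apply: (lim0 hv _ Hcv) => n; rewrite sE big1 // => i _.
have tz : forall i, (i < n0)%N -> t i = 0.
  move=> j hj; apply/eqP/negPn/negP => tj; move/negP: nex; apply.
  by apply/existsP; exists (Ordinal hj).
case: (eqVneq u 0) => [u0|unz].
  case: (nat_of_ord i) => [|m]; last by rewrite /t u0 expr0n mulr0.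
  case: (posnP n0) => [n00|n0pos]; last exact: tz.
  by rewrite /t cm ?rmorph0 ?mul0r // => j; rewrite n00.
rewrite /t cm ?rmorph0 ?mul0r // => j hj.
have := tz j hj; rewrite /t => /eqP; rewrite mulf_eq0 expf_eq0 (negbTE unz) andbF orbF.
by rewrite fmorph_eq0 => /eqP.
Qed.
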